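(* For all $\mathit{in}_1, \mathit{in}_2, \mathit{in}_3 \in \mathcal{T}$, if $\mathit{in}_3 \hookrightarrow \mathit{in}_2$ and $\mathit{in}_2 \hookrightarrow \mathit{in}_1$, then $\mathit{in}_3 \hookrightarrow \mathit{in}_1$.
   Context: $\mathcal{T}$ is a finite set of inputs. Each input $\mathit{in}$ covers a nonempty finite set $\mathrm{Obj}(\mathit{in})$ of objectives and has a cost $c(\mathit{in}) > 0$. For $S \subseteq \mathcal{T}$, $\mathrm{Obj}(S) = \bigcup_{\mathit{in} \in S} \mathrm{Obj}(\mathit{in})$ and $c(S) = \sum_{\mathit{in} \in S} c(\mathit{in})$. There are no duplicates: two distinct inputs of $\mathcal{T}$ never have both the same set of covered objectives and the same cost. Local dominance of an input by a subset: for $\mathit{in} \in \mathcal{T}$ and $S \subseteq \mathcal{T}$, $\mathit{in} \sqsubseteq S$ iff $\mathit{in} \notin S$, $\mathrm{Obj}(\mathit{in}) \subseteq \mathrm{Obj}(S)$ and $c(\mathit{in}) \ge c(S)$. Local dominance between inputs: $\mathit{in}_1 \hookrightarrow \mathit{in}_2$ iff there exists $S \subseteq \mathcal{T}$ with $\mathit{in}_1 \in S$ and $\mathit{in}_2 \sqsubseteq S$. *)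

(* Defs.v *)
From mathcomp Require Import all_boot all_order all_algebra.
Set Implicit Arguments. Unset Strict Implicit. Unset Printing Implicit Defensive.
Import Order.TTheory GRing.Theory Num.Theory.
Local Open Scope ring_scope.

Section Dominance.
Variables (R : realFieldType) (O T : finType).
Variables (Obj : T -> {set O}) (c : T -> R).

Definition ObjS (S : {set T}) : {set O} := \bigcup_(i in S) Obj i.
Definition costS (S : {set T}) : R := \sum_(i in S) c i.

Definition ldom_set (i : T) (S : {set T}) : Prop :=
  i \notin S /\ Obj i \subset ObjS S /\ costS S <= c i.

Definition ldom (i1 i2 : T) : Prop :=
  exists S : {set T}, i1 \in S /\ ldom_set i2 S.
End Dominance.

(* Main.v *)
Require Import Defs.
From mathcomp Require Import all_boot all_order all_algebra.
Import Order.TTheory GRing.Theory Num.Theory.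
Local Open Scope ring_scope.

Lemma costS_U {R : realFieldType} {T : finType} {c : T -> R}
  (c_ge0 : forall i, 0 <= c i) (A B : {set T}) :
  costS c (A :|: B) <= costS c A + costS c B.
Proof.
rewrite /costS (bigID (fun i => i \in A)) /=.
rewrite [X in _ <= _ + X](bigID (fun i => i \in A)) /=.
have -> : \sum_(i in A :|: B | i \in A) c i = \sum_(i in A) c i.
  by apply: eq_bigl => i; rewrite in_setU; case: (i \in A); rewrite ?andbF ?andbT.
have -> : \sum_(i in A :|: B | i \notin A) c i = \sum_(i in B | i \notin A) c i.
  by apply: eq_bigl => i; rewrite in_setU; case: (i \in A); rewrite /= ?andbF ?andbT.
rewrite lerD2l lerDr; apply: sumr_ge0 => i _; exact: c_ge0.
Qed.

Lemma costS_D1 {R : realFieldType} {T : finType} {c : T -> R} {S : {set T}} {i} :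
  i \in S -> costS c S = c i + costS c (S :\ i).
Proof. move=> iS; rewrite /costS (big_setD1 i iS) //. Qed.

Lemma costS_ge0 {R : realFieldType} {T : finType} {c : T -> R}
  (c_ge0 : forall i, 0 <= c i) S : 0 <= costS c S.
Proof. by apply: sumr_ge0 => i _; exact: c_ge0. Qed.

Lemma costS_singl {R : realFieldType} {T : finType} {c : T -> R}
  (c_pos : forall i, 0 < c i) {S : {set T}} {i} :
  i \in S -> costS c S <= c i -> S = [set i].
Proof.
move=> iS; rewrite (costS_D1 iS) gerDl => H.
have H0 : costS c (S :\ i) = 0.
  by apply/eqP; rewrite eq_le H; apply: sumr_ge0 => j _; exact: ltW.
apply/setP => j; rewrite in_set1; case: eqP => [->//|/eqP nji].
apply/negP => jS.
have := psumr_eq0P (fun k _ => ltW (c_pos k)) H0 (i:=j).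
rewrite !inE nji jS => /(_ isT) cj; have := c_pos j; by rewrite cj ltxx.
Qed.

Theorem mainTheorem8 (R : realFieldType) (O T : finType)
    (Obj : T -> {set O}) (c : T -> R)
    (Obj_nonempty : forall i : T, Obj i != set0)
    (c_pos : forall i : T, 0 < c i)
    (no_dup : forall i j : T, Obj i = Obj j -> c i = c j -> i = j) :
  forall in1 in2 in3 : T,
    ldom Obj c in3 in2 -> ldom Obj c in2 in1 -> ldom Obj c in3 in1.
Proof.
move=> in1 in2 in3 [S1 [i3S1 [n2S1 [O2 C2]]]] [S2 [i2S2 [n1S2 [O1 C1]]]].
have c_ge0 : forall i, 0 <= c i by move=> i; exact: ltW.
have C2' : c in2 <= costS c S2 by rewrite (costS_D1 i2S2) lerDl costS_ge0.
have n1S1 : in1 \notin S1.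
  apply/negP => i1S1.
  have C1' : c in1 <= costS c S1 by rewrite (costS_D1 i1S1) lerDl costS_ge0.
  have eS1 : S1 = [set in1] by apply: costS_singl => //; apply: le_trans C2 (le_trans C2' C1).
  have eS2 : S2 = [set in2] by apply: costS_singl => //; apply: le_trans C1 (le_trans C1' C2).
  move: O1 O2; rewrite eS1 eS2 /ObjS !big_set1 => O1 O2.
  have e : in1 = in2.
    apply: no_dup; first by apply/eqP; rewrite eqEsubset O1 O2.
    by apply/eqP; rewrite eq_le (le_trans C1' C2) (le_trans C2' C1).
  by move: n2S1; rewrite -e i1S1.
exists (S1 :|: (S2 :\ in2)); split; first by rewrite in_setU i3S1.
split; first by rewrite !inE negb_or n1S1 /= negb_and n1S2 orbT.
split.
  apply: (subset_trans O1); apply/subsetP => o /bigcupP [j jS2 oj].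
  case: (eqVneq j in2) => [ej|nj].
    move: oj; rewrite ej => /(subsetP O2) /bigcupP [k kS1 ok].
    by apply/bigcupP; exists k => //; rewrite in_setU kS1.
  by apply/bigcupP; exists j => //; rewrite !inE nj jS2 orbT.
apply: le_trans (costS_U c_ge0 _ _) _.
apply: le_trans C1; rewrite (costS_D1 i2S2); exact: lerD.
Qed.
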